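(* Let $c(t)=\sum_{n\ge0}c_nt^n\in\mathbb Q[h,\beta,\gamma][[t]]$. Then $$\Big(1-\frac\beta4t^2\Big)^2\frac{d}{dt}c(t)=(c(t)-1)\Big(h\Big(1-\frac\beta4t^2\Big)-\gamma\frac{t^2}2\Big).$$
   Context: $h,\beta,\gamma$ are formal variables. The $c_n\in\mathbb Q[h,\beta,\gamma]$ are defined by $c_0=2$ and, for $n\ge1$, by $\log\big(1+\sum_{n\ge1}c_nt^n\big)=\sum_{m\ge1}(-1)^{m-1}(m-1)!\,\mathrm{ch}_mt^m$, where $\mathrm{ch}_1=h$, $\mathrm{ch}_{2n}=0$, and $\mathrm{ch}_{2n-1}=\frac1{(2n-1)!}\big(\frac{\beta h}4-\frac{n-1}2\gamma\big)\big(\frac\beta4\big)^{n-2}$ for $n\ge2$ (i.e. $1+\sum_{n\ge1}c_nt^n$ is the total Chern polynomial of a virtual class with Chern character components $\mathrm{ch}_m$). *)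

(* Defs.v *)
From mathcomp Require Import all_boot all_order all_algebra.
From mathcomp Require Import mpoly.
Set Implicit Arguments. Unset Strict Implicit. Unset Printing Implicit Defensive.
Import GRing.Theory.
Local Open Scope ring_scope.

Definition P := {mpoly rat[3]}.
Definition vh : P := 'X_(@Ordinal 3 0 isT).
Definition vbeta : P := 'X_(@Ordinal 3 1 isT).
Definition vgamma : P := 'X_(@Ordinal 3 2 isT).
Definition qc (q : rat) : P := q%:MP.

Definition ps := nat -> P.
Definition ps_const (a : P) : ps := fun n => if n == 0%N then a else 0.
Definition ps_t : ps := fun n => if n == 1%N then 1 else 0.
Definition ps_add (f g : ps) : ps := fun n => f n + g n.
Definition ps_sub (f g : ps) : ps := fun n => f n - g n.
Definition ps_scale (a : P) (f : ps) : ps := fun n => a * f n.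
Definition ps_mul (f g : ps) : ps :=
  fun n => \sum_(i < n.+1) f i * g (n - i)%N.
Definition ps_pow (f : ps) (k : nat) : ps := iter k (ps_mul f) (ps_const 1).
Definition ps_deriv (f : ps) : ps := fun n => (n.+1)%:R * f n.+1.

(* Formal logarithm log(1 + X) = sum_{k>=1} (-1)^(k-1) X^k / k, for X with
   zero constant term; the coefficient of t^n only involves k <= n
   (the terms k > n vanish since X(0) = 0), so this truncation is exact. *)
Definition ps_log1p (X : ps) : ps :=
  fun n => \sum_(1 <= k < n.+1) qc ((-1) ^+ k.-1 / k%:R) * ps_pow X k n.

Definition ch (m : nat) : P :=
  if m == 1%N then vh
  else if ~~ odd m then 0
  else let n := (m.+1 %/ 2)%N in   (* m = 2n - 1, n >= 2 *)
       qc (1 / (m`!)%:R) *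
       (vbeta * vh * qc (1 / 4) - qc ((n.-1)%:R / 2) * vgamma) *
       (vbeta * qc (1 / 4)) ^+ (n - 2).

Definition c_defining (c : nat -> P) : Prop :=
  c 0%N = 2 /\
  forall m : nat, (0 < m)%N ->
    ps_log1p (fun n => if n == 0%N then 0 else c n) m
    = qc ((-1) ^+ m.-1 * (m.-1)`!%:R) * ch m.

(* Main.v *)
Require Import Defs.
From mathcomp Require Import all_boot all_order all_algebra.
From mathcomp Require Import mpoly.
From mathcomp Require Import ring.
Set Implicit Arguments. Unset Strict Implicit. Unset Printing Implicit Defensive.
Import GRing.Theory.
Local Open Scope ring_scope.

Definition agree (N : nat) (f : ps) (p : {poly P}) := forall m, (m <= N)%N -> f m = p`_m.
Definition eqm (N : nat) (p q : {poly P}) := forall m, (m <= N)%N -> p`_m = q`_m.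

Lemma agree_mul N f g p q : agree N f p -> agree N g q -> agree N (ps_mul f g) (p * q).
Proof.
move=> Hf Hg m Hm; rewrite /ps_mul coefM; apply: eq_bigr => i _.
have Hi : (i <= N)%N by apply: leq_trans Hm; rewrite -ltnS.
rewrite Hf // Hg //; apply: leq_trans Hm; exact: leq_subr.
Qed.

Lemma eqm_mulr N p q r : eqm N p q -> eqm N (r * p) (r * q).
Proof.
move=> H m Hm; rewrite !coefM; apply: eq_bigr => i _.
rewrite H //; apply: leq_trans Hm; exact: leq_subr.
Qed.

Lemma eqm_mull N p q r : eqm N p q -> eqm N (p * r) (q * r).
Proof. by move=> H; rewrite ![_ * r]mulrC; apply: eqm_mulr. Qed.

Lemma eqm_trans N p q r : eqm N p q -> eqm N q r -> eqm N p r.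
Proof. by move=> H1 H2 m Hm; rewrite H1 // H2. Qed.

Lemma eqm_sym N p q : eqm N p q -> eqm N q p.
Proof. by move=> H m Hm; rewrite H. Qed.

Lemma eqm_le N M p q : (M <= N)%N -> eqm N p q -> eqm M p q.
Proof. by move=> HM H m Hm; apply: H; apply: leq_trans HM. Qed.

Lemma agree_eqm N f p q : agree N f p -> eqm N p q -> agree N f q.
Proof. by move=> H1 H2 m Hm; rewrite H1 // H2. Qed.

Lemma agree_add N f g p q : agree N f p -> agree N g q -> agree N (ps_add f g) (p + q).
Proof. by move=> Hf Hg m Hm; rewrite /ps_add coefD Hf // Hg. Qed.

Lemma agree_sub N f g p q : agree N f p -> agree N g q -> agree N (ps_sub f g) (p - q).
Proof. by move=> Hf Hg m Hm; rewrite /ps_sub coefB Hf // Hg. Qed.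

Lemma agree_scale N a f p : agree N f p -> agree N (ps_scale a f) (a%:P * p).
Proof. by move=> Hf m Hm; rewrite /ps_scale coefCM Hf. Qed.

Lemma agree_const N a : agree N (ps_const a) a%:P.
Proof. by move=> m _; rewrite /ps_const coefC. Qed.

Lemma agree_t N : agree N ps_t 'X.
Proof. by move=> m _; rewrite /ps_t coefX; case: (m == 1%N). Qed.

Lemma agree_deriv N f p : agree N.+1 f p -> agree N (ps_deriv f) p^`().
Proof. by move=> Hf m Hm; rewrite /ps_deriv coef_deriv Hf // mulr_natl. Qed.

Lemma agree_pow N f p k : agree N f p -> agree N (ps_pow f k) (p ^+ k).
Proof.
move=> Hf; elim: k => [|k IH]; first by rewrite expr0 -polyC1; apply: agree_const.
by rewrite exprS /ps_pow iterS; apply: agree_mul.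
Qed.

Lemma agree_le N M f p : (M <= N)%N -> agree N f p -> agree M f p.
Proof. by move=> HM H m Hm; apply: H; apply: leq_trans HM. Qed.

Definition tr (N : nat) (f : ps) : {poly P} := \poly_(i < N.+1) f i.
Lemma agree_tr N f : agree N f (tr N f).
Proof. by move=> m Hm; rewrite coef_poly ltnS Hm. Qed.

Lemma pow_low (p : {poly P}) : p`_0 = 0 -> forall k m, (m < k)%N -> (p ^+ k)`_m = 0.
Proof.
move=> H0; elim=> [//|k IH] m Hm; rewrite exprS coefM big1 // => [[j Hj]] _ /=.
case: j Hj => [|j] Hj; first by rewrite H0 mul0r.
rewrite IH ?mulr0 //; rewrite ltnS in Hj; rewrite ltnS in Hm.
by rewrite ltn_subLR // addSn ltnS (leq_trans Hm) // leq_addl.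
Qed.

Definition acoef (k : nat) : P := qc ((-1) ^+ k.-1 / k%:R).

Definition Lpoly (N : nat) (Xp : {poly P}) : {poly P} :=
  \sum_(1 <= k < N.+1) (acoef k)%:P * Xp ^+ k.

Lemma log_agree N X : X 0%N = 0 -> agree N (ps_log1p X) (Lpoly N (tr N X)).
Proof.
move=> X0 m Hm; rewrite /ps_log1p /Lpoly coef_sum.
have H0 : (tr N X)`_0 = 0 by rewrite /tr coef_poly /= X0.
have HmN : (m.+1 <= N.+1)%N by rewrite ltnS.
rewrite (@big_cat_nat _ _ _ m.+1 1 N.+1 _ _ (ltn0Sn m) HmN) /=.
rewrite [X in _ + X]big1_seq ?addr0; last first.
  move=> k /andP [_]; rewrite mem_index_iota => /andP [Hk _].
  by rewrite coefCM (pow_low H0) ?mulr0.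
apply: eq_bigr => k _; rewrite coefCM /acoef; congr (_ * _).
rewrite (@agree_pow N X _ k (@agree_tr N X) m Hm) //.
Qed.

Lemma geom (x : {poly P}) N : (1 + x) * \sum_(0 <= i < N) (- x) ^+ i = 1 - (- x) ^+ N.
Proof.
elim: N => [|N IH]; first by rewrite big_geq // mulr0 expr0 subrr.
rewrite big_nat_recr //= mulrDr IH exprS; ring.
Qed.

Lemma acoef_k k : (0 < k)%N -> (acoef k) *+ k = (-1) ^+ k.-1.
Proof.
move=> Hk; rewrite /acoef /qc -rmorphMn -mulr_natr divfK; last first.
  by rewrite Num.Theory.pnatr_eq0 -lt0n.
by rewrite rmorphXn rmorphN1.
Qed.

Lemma Lpoly_deriv N Xp : (Lpoly N Xp)^`() = Xp^`() * \sum_(0 <= i < N) (- Xp) ^+ i.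
Proof.
rewrite /Lpoly raddf_sum /= mulr_sumr big_add1 /=.
apply: eq_big_nat => k Hk.
rewrite deriv_mulC deriv_exp /= mulrnAr -mulrnAl -raddfMn /= acoef_k //.
rewrite /= rmorphXn rmorphN1 [in RHS]exprNn; ring.
Qed.

Lemma log_key N (Xp : {poly P}) : Xp`_0 = 0 ->
  eqm N ((1 + Xp) * (Lpoly N.+1 Xp)^`()) Xp^`().
Proof.
move=> H0 m Hm; rewrite Lpoly_deriv mulrCA geom mulrBr mulr1 coefB.
rewrite [X in _ - X]coefM big1 ?subr0 // => [[j Hj]] _ /=.
rewrite pow_low ?mulr0 //; first by rewrite coefN H0 oppr0.
by rewrite ltnS; apply: leq_trans (leq_subr _ _) Hm.
Qed.

Definition bb : P := vbeta * qc (1 / 4).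

Definition Ee (j : nat) : P :=
  if j is j'.+1 then
    (vbeta * vh * qc (1 / 4) - qc ((j'.+1)%:R / 2) * vgamma) * (vbeta * qc (1 / 4)) ^+ j'
  else vh.

Definition E (i : nat) : P := if odd i then 0 else Ee i./2.

Definition ell (m : nat) : P := qc ((-1) ^+ m.-1 * (m.-1)`!%:R) * ch m.

Lemma qcM (x y : rat) : qc (x * y) = qc x * qc y.
Proof. by rewrite /qc rmorphM. Qed.
Lemma qcMn (x : rat) k : qc (x *+ k) = qc x *+ k.
Proof. by rewrite /qc rmorphMn. Qed.
Lemma qc1 : qc 1 = 1.
Proof. by rewrite /qc rmorph1. Qed.
Lemma qcnat k : qc k%:R = k%:R.
Proof. by rewrite /qc rmorph_nat. Qed.

Lemma fact_ne0 k : (k`!%:R : rat) != 0.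
Proof. by rewrite Num.Theory.pnatr_eq0 -lt0n fact_gt0. Qed.

Lemma ratfact k : (1 * (k`!)%:R) * (1 / ((k.+1)`!)%:R) *+ k.+1 = 1 :> rat.
Proof.
rewrite factS natrM -mulr_natr.
have H1 : ((k.+1)%:R : rat) != 0 by rewrite Num.Theory.pnatr_eq0.
have H2 := fact_ne0 k.
set a := (k`!%:R : rat); set b := ((k.+1)%:R : rat).
have -> : 1 * a * (1 / (b * a)) * b = (b * a) / (b * a) by ring.
by rewrite divff // mulf_neq0.
Qed.

Lemma Ecoef i : ell i.+1 *+ i.+1 = E i.
Proof.
rewrite /ell /E /ch /=.
case: (boolP (odd i)) => Hi.
  by case: i Hi => [//|i] Hi /=; rewrite mulr0 mul0rn.
rewrite /=.
rewrite -[in LHS](odd_double_half i) (negbTE Hi) add0n.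
rewrite -[in RHS](odd_double_half i) (negbTE Hi) add0n doubleK.
move: (i./2) => j {Hi}.
case: j => [|j]; first by rewrite /= qc1 !mul1r.
have Hd : ((j.+1).*2.+2 %/ 2 = j.+2)%N by rewrite -doubleS -muln2 mulnK.
rewrite /= Hd /=.
have Hsgn : ((-1) ^+ (j.+1).*2 : rat) = 1.
  by rewrite -muln2 exprM sqrr_sign.
have -> : (j.+2 - 2 = j)%N by rewrite subSS subSS subn0.
rewrite Hsgn.
set k := (j.+1).*2.
have -> : forall (x y : rat) (S T : P), (qc x * (qc y * S * T)) *+ k.+1 = qc (x * y *+ k.+1) * (S * T).
  by move=> x y S T; rewrite qcMn qcM mulrnAl !mulrA.
by rewrite ratfact qc1 mul1r.
Qed.

Definition Ap : {poly P} := 1 - bb%:P * ('X * 'X).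
Definition Rp : {poly P} := vh%:P * Ap - (vgamma * qc (1 / 2))%:P * ('X * 'X).
Definition Dp (n : nat) : {poly P} := \poly_(i < n.+1) E i.

Lemma Dcoef n k : (k <= n)%N -> (Dp n)`_k = E k.
Proof. by move=> Hk; rewrite /Dp coef_poly ltnS Hk. Qed.

Lemma qchalf j : qc (j%:R / 2) = j%:R * qc (1 / 2).
Proof. by rewrite -qcnat -qcM div1r. Qed.

Lemma AAD (D : {poly P}) : Ap * Ap * D = D - (bb *+ 2)%:P * ('X^2 * D) + (bb ^+ 2)%:P * ('X^4 * D).
Proof.
rewrite /Ap raddfMn rmorphXn /=; set B := bb%:P; ring.
Qed.

Lemma K2 n : eqm n (Ap * Ap * Dp n) Rp.
Proof.
move=> m Hm; rewrite AAD coefD coefB !coefCM !coefXnM.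
rewrite /Rp coefB !coefCM /Ap coefB coefCM -expr2 coefXn coef1.
rewrite !Dcoef ?(leq_trans (leq_subr _ _) Hm) // {Hm}.
case: m => [|[|[|[|m]]]]; rewrite /E /= ?qchalf /bb.
- ring.
- ring.
- ring.
- ring.
rewrite !subSS subn0 !negbK.
case: (odd m) => /=.
  ring.
move: (m./2) => j.
case: j => [|j] /=; rewrite ?qchalf.
  ring.
rewrite !exprS; ring.
Qed.

Theorem lemma4p1 (c : nat -> P) :
  c_defining c ->
  let A : ps := ps_sub (ps_const 1)
                  (ps_scale (vbeta * qc (1 / 4)) (ps_mul ps_t ps_t)) in
  forall n : nat,
    ps_mul (ps_mul A A) (ps_deriv c) n
    = ps_mul (ps_sub c (ps_const 1))
        (ps_sub (ps_scale vh A)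
                (ps_scale (vgamma * qc (1 / 2)) (ps_mul ps_t ps_t))) n.
Proof.
move=> [c0 Hlog] A n.
pose X : ps := fun k => if k == 0%N then 0 else c k.
have HL : forall m, (0 < m)%N -> ps_log1p X m = ell m := Hlog.
have X0 : X 0%N = 0 by [].
pose Xp := tr n.+1 X.
have H0 : Xp`_0 = 0 by rewrite /Xp /tr coef_poly /= X0.
have HA : agree n A Ap.
  apply: agree_sub; first by rewrite -polyC1; apply: agree_const.
  by apply: agree_scale; apply: agree_mul; apply: agree_t.
have Hd : agree n (ps_deriv c) Xp^`().
  move=> m Hm; rewrite /ps_deriv coef_deriv /Xp /tr coef_poly ltnS ltnS Hm /X /=.
  by rewrite mulr_natl.
have HC : agree n (ps_sub c (ps_const 1)) (1 + Xp).
  move=> m Hm; rewrite /ps_sub /ps_const coefD coef1 /Xp /tr coef_poly.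
  case: m Hm => [|m] Hm /=; first by rewrite c0; ring.
  by rewrite ltnS (leq_trans Hm) // subr0 add0r.
have HR : agree n (ps_sub (ps_scale vh A) (ps_scale (vgamma * qc (1 / 2)) (ps_mul ps_t ps_t))) Rp.
  apply: agree_sub; first by apply: agree_scale.
  by apply: agree_scale; apply: agree_mul; apply: agree_t.
rewrite (agree_mul (agree_mul HA HA) Hd) // (agree_mul HC HR) //.
have eq2 : eqm n ((Lpoly n.+1 Xp)^`()) (Dp n).
  move=> m Hm; rewrite coef_deriv Dcoef //.
  rewrite -(@log_agree n.+1 X X0 m.+1) ?ltnS // HL //.
  by rewrite Ecoef.
have eq1 := eqm_mulr (Ap * Ap) (eqm_sym (@log_key n Xp H0)).
have eq3 := eqm_mulr (Ap * Ap) (eqm_mulr (1 + Xp) eq2).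
have eq4 := eqm_mulr (1 + Xp) (@K2 n).
have Heq : Ap * Ap * ((1 + Xp) * Dp n) = (1 + Xp) * (Ap * Ap * Dp n).
  by rewrite mulrCA.
rewrite Heq in eq3.
by apply: (eqm_trans eq1 (eqm_trans eq3 eq4)).
Qed.
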